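(* Let $B\in\mathbb{R}^{N_x\times N_x}$ be symmetric positive definite, $\bar x\in\mathbb{R}^{N_x}$, and $V(x) = \frac12(x-\bar x)^{\rm T}B^{-1}(x-\bar x)$ (i.e. $U\equiv0$). For step size $\Delta\tau>0$ consider the scheme $$p_{n+1/2} = p_n - \tfrac{\Delta\tau}{2}\nabla_xV(x_n),\quad x_{n+1} = x_n + \Delta\tau\,\widetilde M^{-1}p_{n+1/2},\quad p_{n+1} = p_{n+1/2}-\tfrac{\Delta\tau}{2}\nabla_xV(x_{n+1}),$$ with $\widetilde M = I + \frac{\Delta\tau^2}{4}B^{-1}$. Then for all $\Delta\tau>0$ and all $(x_n,p_n)$, $$\mathcal{H}(x_{n+1},p_{n+1}) = \mathcal{H}(x_n,p_n),\qquad \mathcal{H}(x,p) := \tfrac12p^{\rm T}p + V(x).$$ *)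

(* Defs.v *)
From HB Require Import structures.
From mathcomp Require Import all_boot all_order all_algebra.
Set Implicit Arguments. Unset Strict Implicit. Unset Printing Implicit Defensive.
Import Order.TTheory GRing.Theory Num.Theory.
Local Open Scope ring_scope.

Section Defs.
Variables (R : realFieldType) (n : nat).

Definition sym_posdef (B : 'M[R]_n) : Prop :=
  B^T = B /\ forall v : 'cV[R]_n, v != 0 -> 0 < (v^T *m B *m v) 0 0.

Definition Vpot (B : 'M[R]_n) (xbar x : 'cV[R]_n) : R :=
  2^-1 * ((x - xbar)^T *m invmx B *m (x - xbar)) 0 0.

(* grad_x V(x) = B^{-1} (x - xbar)  (B, hence B^{-1}, symmetric) *)
Definition gradV (B : 'M[R]_n) (xbar x : 'cV[R]_n) : 'cV[R]_n :=
  invmx B *m (x - xbar).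

Definition Ham (B : 'M[R]_n) (xbar x p : 'cV[R]_n) : R :=
  2^-1 * (p^T *m p) 0 0 + Vpot B xbar x.

Definition Mtilde (B : 'M[R]_n) (dt : R) : 'M[R]_n :=
  1%:M + (dt ^+ 2 / 4) *: invmx B.

End Defs.

(* Main.v *)
Require Import Defs.
From HB Require Import structures.
From mathcomp Require Import all_boot all_order all_algebra.
From mathcomp Require Import ring lra.
Import Order.TTheory GRing.Theory Num.Theory.
Local Open Scope ring_scope.

Set Implicit Arguments.
Section Aux.
Variables (R : realFieldType) (n : nat).
Implicit Types (u w : 'cV[R]_n) (A : 'M[R]_n).

Definition dot u w : R := (u^T *m w) 0 0.

Lemma dotDl u1 u2 w : dot (u1 + u2) w = dot u1 w + dot u2 w.
Proof. by rewrite /dot linearD /= mulmxDl mxE. Qed.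
Lemma dotDr u w1 w2 : dot u (w1 + w2) = dot u w1 + dot u w2.
Proof. by rewrite /dot mulmxDr mxE. Qed.
Lemma dotZl a u w : dot (a *: u) w = a * dot u w.
Proof. by rewrite /dot linearZ /= -scalemxAl mxE. Qed.
Lemma dotZr a u w : dot u (a *: w) = a * dot u w.
Proof. by rewrite /dot -scalemxAr mxE. Qed.
Lemma dotNl u w : dot (- u) w = - dot u w.
Proof. by rewrite -scaleN1r dotZl mulN1r. Qed.
Lemma dotNr u w : dot u (- w) = - dot u w.
Proof. by rewrite -scaleN1r dotZr mulN1r. Qed.
Lemma dotC u w : dot u w = dot w u.
Proof. by by rewrite /dot -[w^T *m u]trmxK trmx_mul trmxK [in RHS]mxE. Qed.
Lemma dotAl A u w : A^T = A -> dot (A *m u) w = dot u (A *m w).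
Proof. by move=> AT; rewrite /dot trmx_mul AT mulmxA. Qed.

Lemma dot_ge0 u : 0 <= dot u u.
Proof. rewrite /dot mxE; apply: sumr_ge0 => i _; by rewrite mxE -expr2 sqr_ge0. Qed.
End Aux.
Arguments dot {R n}.
Arguments dot_ge0 {R n}.

Theorem mainTheorem16 (R : realFieldType) (n : nat) (B : 'M[R]_n)
    (xbar : 'cV[R]_n) (dt : R) (xn pn : 'cV[R]_n) :
  sym_posdef B -> 0 < dt ->
  let ph := pn - (dt / 2) *: gradV B xbar xn in
  let xn1 := xn + dt *: (invmx (Mtilde B dt) *m ph) in
  let pn1 := ph - (dt / 2) *: gradV B xbar xn1 in
  Ham B xbar xn1 pn1 = Ham B xbar xn pn.
Proof.
move=> [BT Bpos] dtpos ph xn1 pn1.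
have Bu : B \in unitmx.
  rewrite unitmxE unitfE; apply/det0P => -[v vn0 vB].
  have := Bpos v^T; rewrite trmx_eq0 vn0 trmxK vB mul0mx mxE ltxx.
  by move/(_ isT).
set A := invmx B.
have AT : A^T = A by rewrite /A trmx_inv BT.
have Apos : forall v : 'cV[R]_n, v != 0 -> 0 < dot v (A *m v).
  move=> v vn0; set w := A *m v.
  have vw : v = B *m w by rewrite /w mulmxA mulmxV // mul1mx.
  have wn0 : w != 0 by apply: contra vn0 => /eqP H; rewrite vw H mulmx0.
  rewrite {1}vw dotC /dot mulmxA; exact: Bpos.
set k := dt ^+ 2 / 4.
have kpos : 0 < k by rewrite /k divr_gt0 // exprn_gt0.
have Mu : Mtilde B dt \in unitmx.
  rewrite unitmxE unitfE; apply/det0P => -[v vn0 vM].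
  have vM' : Mtilde B dt *m v^T = 0.
    by rewrite -[_ *m _]trmxK trmx_mul trmxK /Mtilde linearD /= trmx1 linearZ /= -/A AT vM trmx0.
  have : dot v^T (Mtilde B dt *m v^T) = 0 by rewrite vM' /dot mulmx0 mxE.
  rewrite /Mtilde mulmxDl mul1mx -scalemxAl dotDr dotZr.
  have v0 : v^T != 0 by rewrite trmx_eq0.
  have h1 := Apos _ v0.
  have h2 := dot_ge0 v^T.
  have h3 := mulr_gt0 kpos h1.
  move=> H; move: h2 h3 H; rewrite -/k -/A; generalize (dot v^T v^T) (k * dot v^T (A *m v^T)) => a b; lra.
set M := Mtilde B dt.
set d := dt *: (invmx M *m ph).
have Md : M *m d = dt *: ph by rewrite /d -scalemxAr mulmxA mulmxV // mul1mx.
have dt0 : dt != 0 by rewrite gt_eqF.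
have phE : ph = dt^-1 *: (d + k *: (A *m d)).
  have Mdef : M *m d = d + k *: (A *m d) by rewrite /M /Mtilde mulmxDl mul1mx -scalemxAl.
  by rewrite -Mdef Md scalerA mulVf // scale1r.
have x1E : xn1 - xbar = (xn - xbar) + d by rewrite /xn1 -/M -/d addrAC.
have pE : pn = ph + (dt / 2) *: (A *m (xn - xbar)) by rewrite /ph /gradV subrK.
rewrite /pn1 /Ham /Vpot /gradV -/A x1E pE.
rewrite -!mulmxA -/(dot _ _) -/(dot (xn - xbar) _) -/(dot pn1 _).
rewrite -![(_^T *m _) 0 0]/(dot _ _).
move: (xn - xbar) => y.
rewrite phE; clearbody d.
rewrite !(mulmxDr, scalerDr, scaleNr) -?scalemxAr.
rewrite !(dotDl, dotDr, dotZl, dotZr, dotNl, dotNr).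
rewrite !(dotAl _ _ _ AT).
have s1 : dot y (A *m d) = dot d (A *m y) by rewrite dotC (dotAl _ _ _ AT).
have s2 : dot y (A *m (A *m d)) = dot d (A *m (A *m y)).
  by rewrite dotC !(dotAl _ _ _ AT).
rewrite s1 s2 /k.
move: (dot d d) (dot d (A *m d)) (dot d (A *m (A *m d))) (dot d (A *m y))
  (dot d (A *m (A *m y))) (dot y (A *m (A *m y))) (dot y (A *m y)) => a1 a2 a3 a4 a5 a6 a7.
by field.
Qed.
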